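(* Let $N\ge1$, $\sigma\ge0$, and let $(x_i(t),v_i(t))_{i=1}^N$, $t\ge0$, be a solution of $$\dot x_i=v_i,\qquad \dot v_i=-\frac{\|v_i\|^2}{\|x_i\|^2}x_i+\sum_{j=1}^N\frac{\psi_{ij}}{N}\big(R(x_j,x_i)v_j-v_i\big)+\sum_{k=1}^N\frac{\sigma}{N}\big(\|x_i\|^2x_k-\langle x_i,x_k\rangle x_i\big),$$ with initial data satisfying $\|x_i(0)\|=1$ and $\langle v_i(0),x_i(0)\rangle=0$ for all $i$, where the $\psi_{ij}$ are nonnegative bounded functions with $\psi_{ij}=\psi_{ji}$ for all $i,j$. Then $$\frac{d\mathcal{E}}{dt}=-\sum_{i,j=1}^N\frac{\psi_{ij}}{N^2}\big\|R(x_j,x_i)v_j-v_i\big\|^2,$$ and for all $t\ge0$, $$\mathcal{V}(t):=\max_{1\le i\le N}\|v_i(t)\|\le\sqrt{N\mathcal{E}(0)}.$$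
   Context: $\|\cdot\|$ is the Euclidean norm and $\langle\cdot,\cdot\rangle$ the standard inner product on $\mathbb{R}^3$. For column vectors $x_1,x_2\in\mathbb{S}^2$ with $x_1\neq -x_2$: $R(x_1,x_2)=I$ if $x_1=x_2$, and otherwise $R(x_1,x_2)=\langle x_1,x_2\rangle I-x_1x_2^T+x_2x_1^T+(1-\langle x_1,x_2\rangle)uu^T$ with $u=\frac{x_1\times x_2}{\|x_1\times x_2\|}$. When $x_j=-x_i$, the terms $\psi_{ij}R(x_j,x_i)v_j$ and $\psi_{ij}\|R(x_j,x_i)v_j-v_i\|^2$ are taken to be $0$. The energy is $\mathcal{E}=\mathcal{E}_K+\mathcal{E}_C$ with $\mathcal{E}_K(t)=\frac1N\sum_{k=1}^N\|v_k(t)\|^2$ and $\mathcal{E}_C(t)=\frac{\sigma}{2N^2}\sum_{k,l=1}^N\|x_k(t)-x_l(t)\|^2$. *)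

(* Defs.v *)
From HB Require Import structures.
From mathcomp Require Import all_boot all_order all_algebra.
From mathcomp Require Import all_classical all_reals all_analysis.
Set Implicit Arguments. Unset Strict Implicit. Unset Printing Implicit Defensive.
Import Order.TTheory GRing.Theory Num.Theory.
Import numFieldNormedType.Exports.
Local Open Scope ring_scope.

Section Defs.
Variable R : realType.

Definition dot3 (x y : 'cV[R]_3) : R := \sum_(k < 3) x k 0 * y k 0.
Definition norm3 (x : 'cV[R]_3) : R := Num.sqrt (dot3 x x).

Definition cross3 (x y : 'cV[R]_3) : 'cV[R]_3 :=
  let x0 := x (inord 0) 0 in let x1 := x (inord 1) 0 in let x2 := x (inord 2) 0 in
  let y0 := y (inord 0) 0 in let y1 := y (inord 1) 0 in let y2 := y (inord 2) 0 in
  \col_(k < 3) nth 0 [:: x1 * y2 - x2 * y1; x2 * y0 - x0 * y2; x0 * y1 - x1 * y0] k.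

Definition Rot (x1 x2 : 'cV[R]_3) : 'M[R]_3 :=
  if x1 == x2 then 1%:M else
  let u := (norm3 (cross3 x1 x2))^-1 *: cross3 x1 x2 in
  (dot3 x1 x2)%:M - x1 *m x2^T + x2 *m x1^T + (1 - dot3 x1 x2) *: (u *m u^T).

(* psi_ij R(x_j,x_i) v_j - ... with the convention: 0 when x_j = - x_i *)
Definition align_term (p : R) (xj xi vj vi : 'cV[R]_3) : 'cV[R]_3 :=
  if xj == - xi then 0 else p *: (Rot xj xi *m vj - vi).

Definition dissip_term (p : R) (xj xi vj vi : 'cV[R]_3) : R :=
  if xj == - xi then 0 else p * norm3 (Rot xj xi *m vj - vi) ^+ 2.

Variable N : nat.

Definition rhs_v (sigma : R) (psi : 'I_N -> 'I_N -> R -> R)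
    (x v : 'I_N -> R -> 'cV[R]_3) (i : 'I_N) (t : R) : 'cV[R]_3 :=
  - ((norm3 (v i t) ^+ 2 / norm3 (x i t) ^+ 2) *: x i t)
  + \sum_(j < N) align_term (psi i j t / N%:R) (x j t) (x i t) (v j t) (v i t)
  + \sum_(k < N) (sigma / N%:R) *:
       (norm3 (x i t) ^+ 2 *: x k t - dot3 (x i t) (x k t) *: x i t).

Definition energy (sigma : R) (x v : 'I_N -> R -> 'cV[R]_3) (t : R) : R :=
  N%:R^-1 * \sum_(k < N) norm3 (v k t) ^+ 2
  + sigma / (2 * N%:R ^+ 2) * \sum_(k < N) \sum_(l < N) norm3 (x k t - x l t) ^+ 2.

Definition energy_rate (psi : 'I_N -> 'I_N -> R -> R)
    (x v : 'I_N -> R -> 'cV[R]_3) (t : R) : R :=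
  - \sum_(i < N) \sum_(j < N)
      dissip_term (psi i j t / N%:R ^+ 2) (x j t) (x i t) (v j t) (v i t).

Definition Vmax (v : 'I_N -> R -> 'cV[R]_3) (t : R) : R :=
  \big[Num.max/0]_(i < N) norm3 (v i t).

End Defs.

(* Main.v *)
Require Import Defs.
From HB Require Import structures.
From mathcomp Require Import all_boot all_order all_algebra.
From mathcomp Require Import all_classical all_reals all_analysis.
From mathcomp Require Import ring lra.
Import Order.TTheory GRing.Theory Num.Theory.
Import numFieldNormedType.Exports.
Local Open Scope ring_scope.
Local Open Scope classical_set_scope.
Set Implicit Arguments. Unset Strict Implicit. Unset Printing Implicit Defensive.
Section A.
Variable R : realType.
Implicit Types (x y z w : 'cV[R]_3) (a b : R).

Lemma dot3C x y : dot3 x y = dot3 y x.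
Proof. by rewrite /dot3; apply: eq_bigr => k _; rewrite mulrC. Qed.
Lemma dot3Dl x y z : dot3 (x + y) z = dot3 x z + dot3 y z.
Proof. by rewrite /dot3 -big_split; apply: eq_bigr => k _; rewrite !mxE mulrDl. Qed.
Lemma dot3Dr x y z : dot3 z (x + y) = dot3 z x + dot3 z y.
Proof. by rewrite dot3C dot3Dl !(dot3C z). Qed.
Lemma dot3Zl a x y : dot3 (a *: x) y = a * dot3 x y.
Proof. by rewrite /dot3 mulr_sumr; apply: eq_bigr => k _; rewrite !mxE mulrA. Qed.
Lemma dot3Zr a x y : dot3 y (a *: x) = a * dot3 y x.
Proof. by rewrite dot3C dot3Zl dot3C. Qed.
Lemma dot3Nl x y : dot3 (- x) y = - dot3 x y.
Proof. by rewrite -scaleN1r dot3Zl mulN1r. Qed.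
Lemma dot3Nr x y : dot3 y (- x) = - dot3 y x.
Proof. by rewrite -scaleN1r dot3Zr mulN1r. Qed.
Lemma dot3Bl x y z : dot3 (x - y) z = dot3 x z - dot3 y z.
Proof. by rewrite dot3Dl dot3Nl. Qed.
Lemma dot3Br x y z : dot3 z (x - y) = dot3 z x - dot3 z y.
Proof. by rewrite dot3Dr dot3Nr. Qed.
Lemma dot30l x : dot3 0 x = 0.
Proof. by rewrite /dot3 big1 // => k _; rewrite mxE mul0r. Qed.
Lemma dot30r x : dot3 x 0 = 0.
Proof. by rewrite dot3C dot30l. Qed.
Lemma dot3_suml n (f : 'I_n -> 'cV[R]_3) y :
  dot3 (\sum_(j < n) f j) y = \sum_(j < n) dot3 (f j) y.
Proof.
rewrite /dot3 exchange_big /=; apply: eq_bigr => k _.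
by rewrite summxE mulr_suml.
Qed.
Lemma dot3_sumr n (f : 'I_n -> 'cV[R]_3) y :
  dot3 y (\sum_(j < n) f j) = \sum_(j < n) dot3 y (f j).
Proof. by rewrite dot3C dot3_suml; apply: eq_bigr => j _; rewrite dot3C. Qed.
Lemma dot3_ge0 x : 0 <= dot3 x x.
Proof. by rewrite /dot3 sumr_ge0 // => k _; rewrite -expr2 sqr_ge0. Qed.
Lemma norm3_sq x : norm3 x ^+ 2 = dot3 x x.
Proof. by rewrite /norm3 sqr_sqrtr // dot3_ge0. Qed.
Lemma dot3_eq0 x : dot3 x x = 0 -> x = 0.
Proof.
move=> h; apply/matrixP => i j; rewrite ord1 mxE.
have /psumr_eq0P H : (forall k : 'I_3, true -> 0 <= x k 0 * x k 0).
  by move=> k _; rewrite -expr2 sqr_ge0.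
have := H h i isT; by move/eqP; rewrite mulf_eq0 orbb => /eqP.
Qed.
Lemma trmx_mul_dot x y : x^T *m y = (dot3 x y)%:M.
Proof.
apply/matrixP => i j; rewrite !ord1 !mxE /dot3 /=.
by apply: eq_bigr => k _; rewrite !mxE.
Qed.
Lemma outer_mul x y w : (x *m y^T) *m w = dot3 y w *: x.
Proof. by rewrite -mulmxA trmx_mul_dot mul_mx_scalar. Qed.

Definition c0 : 'I_3 := inord 0.
Definition c1 : 'I_3 := inord 1.
Definition c2 : 'I_3 := inord 2.
Lemma dot3E x y : dot3 x y = x c0 0 * y c0 0 + x c1 0 * y c1 0 + x c2 0 * y c2 0.
Proof.
rewrite /dot3 !big_ord_recl big_ord0 addr0 addrA.
by congr (_ * _ + _ * _ + _ * _); congr (_ _ 0); apply/val_inj; rewrite /= inordK.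
Qed.
Lemma cross3E x y :
  [/\ cross3 x y c0 0 = x c1 0 * y c2 0 - x c2 0 * y c1 0,
      cross3 x y c1 0 = x c2 0 * y c0 0 - x c0 0 * y c2 0 &
      cross3 x y c2 0 = x c0 0 * y c1 0 - x c1 0 * y c0 0].
Proof. by rewrite /cross3 !mxE /c0 /c1 /c2 !inordK. Qed.

Lemma cross_dotl x y : dot3 x (cross3 x y) = 0.
Proof. rewrite dot3E; have [-> -> ->] := cross3E x y; ring. Qed.
Lemma cross_dotr x y : dot3 y (cross3 x y) = 0.
Proof. rewrite dot3E; have [-> -> ->] := cross3E x y; ring. Qed.
Lemma cross_sq x y : dot3 (cross3 x y) (cross3 x y) = dot3 x x * dot3 y y - dot3 x y ^+ 2.
Proof. rewrite !dot3E; have [-> -> ->] := cross3E x y; ring. Qed.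
Lemma gram x y w : dot3 (cross3 x y) w ^+ 2 =
  dot3 w w * (dot3 x x * dot3 y y - dot3 x y ^+ 2) - dot3 y y * dot3 x w ^+ 2
  - dot3 x x * dot3 y w ^+ 2 + 2 * dot3 x y * dot3 x w * dot3 y w.
Proof. rewrite !dot3E; have [-> -> ->] := cross3E x y; ring. Qed.
End A.

Section B.
Variable R : realType.
Implicit Types (x y z w : 'cV[R]_3) (a b : R).

Definition uvec x1 x2 : 'cV[R]_3 := (norm3 (cross3 x1 x2))^-1 *: cross3 x1 x2.

Lemma RotE x1 x2 w : x1 != x2 ->
  Rot x1 x2 *m w = dot3 x1 x2 *: w - dot3 x2 w *: x1 + dot3 x1 w *: x2
     + ((1 - dot3 x1 x2) * dot3 (uvec x1 x2) w) *: uvec x1 x2.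
Proof.
move=> /negPf h; rewrite /Rot h -/(uvec x1 x2).
by rewrite !mulmxDl mulNmx mul_scalar_mx -scalemxAl !outer_mul scalerA.
Qed.

Lemma Rot_dot x1 x2 w : dot3 x2 (Rot x1 x2 *m w) =
  if x1 == x2 then dot3 x1 w else dot3 x2 x2 * dot3 x1 w.
Proof.
case: eqP => [->|/eqP h]; first by rewrite /Rot eqxx mul1mx.
rewrite RotE // !(dot3Dr, dot3Nr, dot3Zr) /uvec ?dot3Zr cross_dotr.
rewrite (dot3C x2 x1); ring.
Qed.

Lemma cross_neq0 x1 x2 : dot3 x1 x1 = 1 -> dot3 x2 x2 = 1 -> x1 != x2 -> x1 != - x2 ->
  dot3 (cross3 x1 x2) (cross3 x1 x2) != 0.
Proof.
move=> h1 h2 n1 n2; rewrite cross_sq h1 h2; apply/eqP => hc.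
set c := dot3 x1 x2 in hc.
have hz : dot3 (x1 - c *: x2) (x1 - c *: x2) = 0.
  rewrite !(dot3Dl, dot3Nl, dot3Zl, dot3Dr, dot3Nr, dot3Zr) h1 h2 (dot3C x2 x1) -/c.
  nra.
have /eqP := dot3_eq0 hz; rewrite subr_eq0 => /eqP e.
have : (c - 1) * (c + 1) = 0 by nra.
move/eqP; rewrite mulf_eq0 => /orP [/eqP hc1|/eqP hc1].
  by move: n1; rewrite e (_ : c = 1) ?scale1r ?eqxx //; lra.
by move: n2; rewrite e (_ : c = -1) ?scaleN1r ?eqxx //; lra.
Qed.

Lemma Rot_norm x1 x2 w : dot3 x1 x1 = 1 -> dot3 x2 x2 = 1 -> x1 != - x2 ->
  dot3 (Rot x1 x2 *m w) (Rot x1 x2 *m w) = dot3 w w.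
Proof.
move=> h1 h2 n2.
case: (eqVneq x1 x2) => [->|n1]; first by rewrite /Rot eqxx mul1mx.
have hS := cross_neq0 h1 h2 n1 n2.
have hS' : dot3 (cross3 x1 x2) (cross3 x1 x2) = 1 - dot3 x1 x2 ^+ 2 by rewrite cross_sq h1 h2 mul1r.
have hk : (norm3 (cross3 x1 x2))^-1 ^+ 2 * (1 - dot3 x1 x2 ^+ 2) = 1.
  by rewrite exprVn norm3_sq -hS' mulVf.
have huu : dot3 (uvec x1 x2) (uvec x1 x2) = 1.
  by rewrite /uvec dot3Zl dot3Zr mulrA -expr2 hS' hk.
have hu1 : dot3 x1 (uvec x1 x2) = 0 by rewrite /uvec dot3Zr cross_dotl mulr0.
have hu2 : dot3 x2 (uvec x1 x2) = 0 by rewrite /uvec dot3Zr cross_dotr mulr0.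
have hg : dot3 (uvec x1 x2) w ^+ 2 * (1 - dot3 x1 x2 ^+ 2) =
   dot3 w w * (1 - dot3 x1 x2 ^+ 2) - dot3 x1 w ^+ 2 - dot3 x2 w ^+ 2
   + 2 * dot3 x1 x2 * dot3 x1 w * dot3 x2 w.
  rewrite /uvec dot3Zl exprMn mulrAC hk mul1r gram h1 h2; ring.
rewrite RotE //; move: huu hu1 hu2 hg; move: (uvec x1 x2) => u huu hu1 hu2 hg.
rewrite !(dot3Dl, dot3Nl, dot3Zl, dot3Dr, dot3Nr, dot3Zr).
rewrite huu h1 h2 hu1 hu2 (dot3C u x1) (dot3C u x2) hu1 hu2 (dot3C x2 x1).
rewrite (dot3C w x1) (dot3C w x2) (dot3C w u).
lra.
Qed.
End B.

Section C.
Variable R : realType.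
Implicit Types (f g : R -> R) (df dg t c : R).

Lemma dM f g df dg t : is_derive t 1 f df -> is_derive t 1 g dg ->
  is_derive t 1 (fun s => f s * g s) (f t * dg + g t * df).
Proof. move=> hf hg; exact: (is_deriveM hf hg). Qed.
Lemma dD f g df dg t : is_derive t 1 f df -> is_derive t 1 g dg ->
  is_derive t 1 (fun s => f s + g s) (df + dg).
Proof. move=> hf hg; exact: (is_deriveD hf hg). Qed.
Lemma dB f g df dg t : is_derive t 1 f df -> is_derive t 1 g dg ->
  is_derive t 1 (fun s => f s - g s) (df - dg).
Proof. move=> hf hg; exact: (is_deriveB hf hg). Qed.
Lemma dC f df t c : is_derive t 1 f df ->
  is_derive t 1 (fun s => c * f s) (c * df).
Proof. move=> hf; have := dM (is_derive_cst c t 1) hf; rewrite mulr0 addr0 /cst. by []. Qed.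
Lemma dS n (h : 'I_n -> R -> R) dh t : (forall i, is_derive t 1 (h i) (dh i)) ->
  is_derive t 1 (fun s => \sum_(i < n) h i s) (\sum_(i < n) dh i).
Proof.
move=> H; have := is_derive_sum H.
by have -> : (\sum_(i < n) h i) = (fun s => \sum_(i < n) h i s) by apply/funext => s; rewrite fct_sumE.
Qed.

Variable A : set R.
Definition wc f := {within A, continuous f}.
Lemma wcM f g : wc f -> wc g -> wc (fun s => f s * g s).
Proof. move=> hf hg y; exact: (continuousM (hf y) (hg y)). Qed.
Lemma wcD f g : wc f -> wc g -> wc (fun s => f s + g s).
Proof. move=> hf hg y; exact: (continuousD (hf y) (hg y)). Qed.
Lemma wcB f g : wc f -> wc g -> wc (fun s => f s - g s).
Proof. move=> hf hg y; exact: (continuousB (hf y) (hg y)). Qed.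
Lemma wcK c : wc (fun _ => c).
Proof. move=> y; exact: cst_continuous. Qed.
Lemma wcC f c : wc f -> wc (fun s => c * f s).
Proof. by move=> hf; apply: wcM => //; apply: wcK. Qed.
Lemma wcS n (h : 'I_n -> R -> R) : (forall i, wc (h i)) -> wc (fun s => \sum_(i < n) h i s).
Proof.
elim: n h => [|n IH] h H.
  have -> : (fun s => \sum_(i < 0) h i s) = (fun _ => 0) by apply/funext => s; rewrite big_ord0.
  exact: wcK.
have -> : (fun s => \sum_(i < n.+1) h i s) =
  (fun s => \sum_(i < n) h (widen_ord (leqnSn n) i) s + h ord_max s).
  by apply/funext => s; rewrite big_ord_recr.
by apply: wcD => //; apply: IH.
Qed.
End C.

Section D.
Variable R : realType.

Lemma within_eps (g : R -> R) s : {within [set t | 0 <= t], continuous g} -> 0 <= s ->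
  forall e, 0 < e -> exists2 d, 0 < d & forall u, 0 <= u -> `|s - u| < d -> `|g s - g u| < e.
Proof.
move=> hc hs e he.
have := hc s; move/cvgrPdist_lt => /(_ e he) H.
have H2 : within [set t : R | 0 <= t] (nbhs s) (fun t => `|g s - g t| < e).
  by rewrite nbhs_subspace_in //.
move: H2; rewrite /within => /nbhs_ballP [d /= dpos Hd].
exists d => // u hu hsu; apply: Hd => //.
Qed.

Lemma dexp (K t : R) : is_derive t 1 (fun s : R => expR (- K * s)) (expR (- K * t) * (- K * 1)).
Proof.
have h1 : is_derive t 1 (fun s : R => - K * s) (- K * 1) by apply: dC; exact: is_derive_id.
exact: (is_derive1_comp (is_derive_expR (- K * t)) h1).
Qed.

Lemma wexp (A : set R) (K : R) : wc A (fun s : R => expR (- K * s)).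
Proof.
apply: continuous_subspaceT => y; apply: differentiable_continuous.
by case: (dexp K y) => /derivable1_diffP.
Qed.

Lemma mono_exp (g dg : R -> R) (K a b : R) : 0 <= a -> a <= b ->
  {within [set t | 0 <= t], continuous g} ->
  (forall t : R, 0 < t -> is_derive t 1 g (dg t)) ->
  (forall t : R, a < t -> t < b -> dg t <= K * g t) ->
  expR (- K * b) * g b <= expR (- K * a) * g a.
Proof.
move=> ha hab hc hd hb.
case: (eqVneq a b) => [->|nab]; first by [].
have altb : a < b by rewrite lt_def eq_sym nab hab.
pose df := fun t : R => expR (- K * t) * dg t + g t * (expR (- K * t) * (- K * 1)).
have H1 : forall t : R, t \in `]a, b[%R -> is_derive t 1 (fun s => expR (- K * s) * g s) (df t).
  move=> t; rewrite in_itv /= => /andP [h1 h2].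
  exact: (dM (dexp K t) (hd t (le_lt_trans ha h1))).
have H2 : {within `[a, b], continuous (fun s => expR (- K * s) * g s)}.
  have H0 : {within [set t : R | 0 <= t], continuous (fun s => expR (- K * s) * g s)}.
    by apply: wcM => //; apply: wexp.
  apply: continuous_subspaceW H0.
  move=> t; rewrite /= in_itv /= => /andP [h _]; exact: le_trans h.
have [c] := MVT altb H1 H2.
rewrite in_itv /= => /andP [hc1 hc2] E.
rewrite -subr_le0 E; apply: mulr_le0_ge0; last by rewrite subr_ge0.
rewrite /df.
have := hb c hc1 hc2; have := expR_gt0 (- K * c) => h1 h2.
nra.
Qed.

Lemma zero_lemma (g dg : R -> R) (K d : R) : 0 < d ->
  {within [set t | 0 <= t], continuous g} -> g 0 = 0 ->
  (forall t : R, 0 <= t -> 0 <= g t) ->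
  (forall t : R, 0 < t -> is_derive t 1 g (dg t)) ->
  (forall t : R, 0 < t -> g t <= d -> dg t <= K * g t) ->
  forall t : R, 0 <= t -> g t = 0.
Proof.
move=> dpos hc g0 gge hd hb t1 ht1.
apply/eqP; rewrite eq_le gge // andbT; rewrite leNgt; apply/negP => gt1.
pose S := [set t : R | 0 <= t <= t1 /\ g t = 0].
have S0 : S 0 by split => //; rewrite lexx ht1.
have hS : has_sup S.
  split; first by exists 0.
  by exists t1 => u [/andP [_ h] _].
set s := sup S.
have s_ub : forall u, S u -> u <= s by move=> u Su; exact: sup_upper_bound.
have s0 : 0 <= s by exact: s_ub.
have st1 : s <= t1 by apply: ge_sup; [exists 0 | move=> u [/andP [_ h] _]].
have gs : g s = 0.
  apply/eqP; rewrite eq_le gge // andbT; rewrite leNgt; apply/negP => gs.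
  have [e epos He] := within_eps hc s0 gs.
  have [u Su hu] := sup_adherent epos hS.
  have Su' := Su; rewrite /S /= in Su'; case: Su' => /andP [u0 _] gu.
  have us : u <= s := s_ub u Su.
  have hsu : `|s - u| < e by rewrite ger0_norm ?subr_ge0 //; move: hu; rewrite -/s; lra.
  by have := He u u0 hsu; rewrite gu subr0 gtr0_norm // ltxx.
have [e epos He] := within_eps hc s0 dpos.
have slt1 : s < t1.
  rewrite lt_def st1 andbT; apply/eqP => es; move: gt1; rewrite es gs ltxx //.
pose t2 := Num.min (s + e / 2) t1.
have st2 : s < t2 by rewrite lt_min slt1 andbT; lra.
have t2le : t2 <= t1 by rewrite ge_min lexx orbT.
have := @mono_exp g dg K s t2 s0 (ltW st2) hc hd.
rewrite gs mulr0.
have H : forall u : R, s < u -> u < t2 -> dg u <= K * g u.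
  move=> u h1 h2; apply: hb; first by apply: le_lt_trans h1.
  have := He u (le_trans s0 (ltW h1)).
  have hue : `|s - u| < e.
    rewrite ltr0_norm ?subr_lt0 //.
    have : u < s + e / 2 by apply: (lt_le_trans h2); rewrite ge_min lexx.
    lra.
  move=> /(_ hue); rewrite gs sub0r normrN => h; apply: ltW; exact: le_lt_trans (ler_norm _) h.
move=> /(_ H) H2.
have g2 : g t2 = 0.
  apply/eqP; rewrite eq_le gge ?andbT; last by lra.
  have := expR_gt0 (- K * t2); nra.
have : t2 <= s by apply: s_ub; split => //; rewrite t2le andbT; lra.
lra.
Qed.

Lemma dBc (f : R -> R) (df t c : R) : is_derive t 1 f df -> is_derive t 1 (fun s => f s - c) df.
Proof. move=> h; have := dB h (is_derive_cst c t 1); rewrite subr0 /cst; by []. Qed.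

Lemma ddot (f g : R -> 'cV[R]_3) (df dg : 'cV[R]_3) (t : R) :
  (forall k, is_derive t 1 (fun s => f s k 0) (df k 0)) ->
  (forall k, is_derive t 1 (fun s => g s k 0) (dg k 0)) ->
  is_derive t 1 (fun s => dot3 (f s) (g s)) (dot3 df (g t) + dot3 (f t) dg).
Proof.
move=> hf hg; rewrite /dot3.
apply: is_derive_eq.
  exact: (dS (h := fun k s => f s k 0 * g s k 0) (fun k => dM (hf k) (hg k))).
by rewrite -big_split /=; apply: eq_bigr => k _; rewrite addrC mulrC [g t k 0 * _]mulrC.
Qed.

Lemma wdot (A : set R) (f g : R -> 'cV[R]_3) :
  (forall k, wc A (fun s => f s k 0)) -> (forall k, wc A (fun s => g s k 0)) ->
  wc A (fun s => dot3 (f s) (g s)).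
Proof.
move=> hf hg; rewrite /dot3.
exact: (wcS (h := fun k s => f s k 0 * g s k 0) (fun k => wcM (hf k) (hg k))).
Qed.

Lemma pt (p q c ai aj G : R) : 0 <= p -> p <= q -> `|c| <= 3/2 ->
  ai ^+ 2 <= G -> aj ^+ 2 <= G -> ai * (p * (c * aj - ai)) <= q * (3/2) * G.
Proof.
move=> p0 pq hc hi hj.
have h1 : `|ai * aj| <= G.
  rewrite normrM.
  have : 0 <= (`|ai| - `|aj|) ^+ 2 by exact: sqr_ge0.
  rewrite -(real_normK (num_real ai)) in hi; rewrite -(real_normK (num_real aj)) in hj.
  nra.
have h2 : ai * (p * (c * aj - ai)) <= p * (`|c| * `|ai * aj|).
  have : ai * (p * (c * aj - ai)) = p * (c * (ai * aj)) - p * ai ^+ 2 by ring.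
  move=> ->.
  have : p * (c * (ai * aj)) <= p * (`|c| * `|ai * aj|).
    apply: ler_wpM2l => //; rewrite -normrM; exact: ler_norm.
  have : 0 <= p * ai ^+ 2 by apply: mulr_ge0 => //; exact: sqr_ge0.
  lra.
apply: (le_trans h2).
have G0 : 0 <= G by apply: le_trans hi; exact: sqr_ge0.
have h3 := ler_pM (normr_ge0 c) (normr_ge0 (ai*aj)) hc h1.
have h4 := ler_pM p0 (mulr_ge0 (normr_ge0 c) (normr_ge0 (ai*aj))) pq h3.
by rewrite -mulrA.
Qed.
End D.

Section E.
Variables (R : realType) (N : nat) (sigma : R) (psi : 'I_N -> 'I_N -> R -> R)
  (x v : 'I_N -> R -> 'cV[R]_3).
Implicit Types (i j : 'I_N) (t : R).
Hypothesis N0 : (0 < N)%N.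
Hypothesis psi0 : forall i j t, 0 <= t -> 0 <= psi i j t.
Variable M : R.
Hypothesis psiM : forall i j t, 0 <= t -> psi i j t <= M.
Hypothesis hxd : forall (i : 'I_N) (k : 'I_3) (t : R), 0 < t -> is_derive t 1 (fun s => x i s k 0) (v i t k 0).
Hypothesis hvd : forall (i : 'I_N) (k : 'I_3) (t : R), 0 < t ->
     is_derive t 1 (fun s => v i s k 0) (rhs_v sigma psi x v i t k 0).

Definition nn i t := dot3 (x i t) (x i t).
Definition aa i t := dot3 (x i t) (v i t).
Definition dnn i t := dot3 (v i t) (x i t) + dot3 (x i t) (v i t).
Definition daa i t := dot3 (v i t) (v i t) + dot3 (x i t) (rhs_v sigma psi x v i t).
Definition GG t := \sum_(i < N) (aa i t * aa i t + (nn i t - 1) * (nn i t - 1)).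
Definition dGG t := \sum_(i < N) ((aa i t * daa i t + aa i t * daa i t) +
   ((nn i t - 1) * dnn i t + (nn i t - 1) * dnn i t)).

Lemma d_nn i t : 0 < t -> is_derive t 1 (nn i) (dnn i t).
Proof. by move=> ht; apply: ddot => k; apply: hxd. Qed.
Lemma d_aa i t : 0 < t -> is_derive t 1 (aa i) (daa i t).
Proof. by move=> ht; apply: ddot => k; [apply: hxd | apply: hvd]. Qed.
Lemma d_GG t : 0 < t -> is_derive t 1 GG (dGG t).
Proof.
move=> ht; apply: dS => i.
exact: (dD (dM (d_aa i ht) (d_aa i ht)) (dM (dBc 1 (d_nn i ht)) (dBc 1 (d_nn i ht)))).
Qed.

Lemma xF i t : nn i t != 0 ->
  dot3 (x i t) (rhs_v sigma psi x v i t) = - dot3 (v i t) (v i t) +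
  \sum_(j < N) (if x j t == - x i t then 0 else
     psi i j t / N%:R * ((if x j t == x i t then aa j t else nn i t * aa j t) - aa i t)).
Proof.
move=> hn; rewrite /rhs_v !dot3Dr dot3Nr dot3Zr !dot3_sumr.
have -> : \sum_(k < N) dot3 (x i t) ((sigma / N%:R) *:
       (norm3 (x i t) ^+ 2 *: x k t - dot3 (x i t) (x k t) *: x i t)) = 0.
  by apply: big1 => k _; rewrite dot3Zr dot3Br !dot3Zr norm3_sq; ring.
rewrite addr0 !norm3_sq -/(nn i t) divfK //; congr (_ + _).
apply: eq_bigr => j _; rewrite /align_term; case: eqP => _; first by rewrite dot30r.
by rewrite dot3Zr dot3Br Rot_dot.
Qed.

Lemma GG_term i t : aa i t ^+ 2 + (nn i t - 1) ^+ 2 <= GG t.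
Proof.
rewrite /GG (bigD1 i) //= -!expr2 lerDl; apply: sumr_ge0 => j _.
by rewrite -!expr2 addr_ge0 // sqr_ge0.
Qed.
Lemma GG_ge0 t : 0 <= GG t.
Proof. by apply: sumr_ge0 => j _; rewrite -!expr2 addr_ge0 // sqr_ge0. Qed.

Lemma Npos : 0 < N%:R :> R.
Proof. by rewrite ltr0n. Qed.

Lemma dGG_bound t : 0 < t -> GG t <= 1/4 -> dGG t <= (N%:R * (3 * M + 4)) * GG t.
Proof.
move=> ht hG.
have M0 : 0 <= M.
  by apply: (le_trans (psi0 (Ordinal N0) (Ordinal N0) (ltW ht))); apply: psiM; exact: ltW.
have G0 := GG_ge0 t.
have Nn : N%:R != 0 :> R by rewrite gt_eqF // Npos.
have -> : N%:R * (3 * M + 4) * GG t = \sum_(i < N) ((3 * M + 4) * GG t).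
  by rewrite sumr_const card_ord -mulrA mulr_natl.
rewrite /dGG.
apply: ler_sum => i _.
have Gi := GG_term i t.
have hn1 : (nn i t - 1) ^+ 2 <= 1/4.
  apply: le_trans hG; apply: le_trans Gi; rewrite lerDr; exact: sqr_ge0.
have nlo : 1/2 <= nn i t by nra.
have nhi : nn i t <= 3/2 by nra.
have nn0 : nn i t != 0 by apply/eqP => h; rewrite h in nlo; lra.
have hdnn : dnn i t = 2 * aa i t by rewrite /dnn dot3C /aa; ring.
have hd : aa i t * daa i t <= 3/2 * M * GG t.
  rewrite /daa xF // addrA addrN add0r mulr_sumr.
  have -> : 3/2 * M * GG t = \sum_(j < N) (M / N%:R * (3/2) * GG t).
    rewrite sumr_const card_ord -[X in _ = X]mulr_natl; field.
  by [].
  apply: ler_sum => j _.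
  case: eqP => _.
    by rewrite mulr0 mulr_ge0 // mulr_ge0 // divr_ge0 // ler0n.
  have -> : (if x j t == x i t then aa j t else nn i t * aa j t) =
     (if x j t == x i t then 1 else nn i t) * aa j t by case: ifP; rewrite ?mul1r.
  apply: pt.
  - by rewrite divr_ge0 // ?ler0n // psi0 // ltW.
  - by rewrite ler_pM2r ?invr_gt0 ?Npos // psiM // ltW.
  - case: ifP => _; first by rewrite normr1; lra.
    by rewrite ger0_norm //; lra.
  - by apply: le_trans Gi; rewrite lerDl; exact: sqr_ge0.
  - by apply: le_trans (GG_term j t); rewrite lerDl; exact: sqr_ge0.
rewrite hdnn.
have : (nn i t - 1) * (2 * aa i t) <= (aa i t ^+ 2 + (nn i t - 1) ^+ 2).
  have := sqr_ge0 (nn i t - 1 - aa i t); nra.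
nra.
Qed.
End E.

Section F.
Variables (R : realType) (N : nat) (sigma : R) (psi : 'I_N -> 'I_N -> R -> R)
  (x v : 'I_N -> R -> 'cV[R]_3).
Implicit Types (i j : 'I_N) (t : R).
Hypothesis N0 : (0 < N)%N.
Hypothesis psi0 : forall i j t, 0 <= t -> 0 <= psi i j t.
Variable M : R.
Hypothesis psiM : forall i j t, 0 <= t -> psi i j t <= M.
Hypothesis hxc : forall i (k : 'I_3), {within [set t : R | 0 <= t], continuous (fun s => x i s k 0)}.
Hypothesis hvc : forall i (k : 'I_3), {within [set t : R | 0 <= t], continuous (fun s => v i s k 0)}.
Hypothesis hxd : forall (i : 'I_N) (k : 'I_3) (t : R), 0 < t -> is_derive t 1 (fun s => x i s k 0) (v i t k 0).
Hypothesis hvd : forall (i : 'I_N) (k : 'I_3) (t : R), 0 < t ->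
     is_derive t 1 (fun s => v i s k 0) (rhs_v sigma psi x v i t k 0).
Hypothesis hx0 : forall i, norm3 (x i 0) = 1.
Hypothesis hv0 : forall i, dot3 (v i 0) (x i 0) = 0.

Lemma invariance t : 0 <= t -> forall i, dot3 (x i t) (x i t) = 1 /\ dot3 (x i t) (v i t) = 0.
Proof.
move=> ht i.
have hc : {within [set t : R | 0 <= t], continuous (GG x v)}.
  apply: (wcS (h := fun i s => aa x v i s * aa x v i s + (nn x i s - 1) * (nn x i s - 1))) => j.
  have ha : wc [set t : R | 0 <= t] (fun s => dot3 (x j s) (v j s)).
    by apply: wdot => k; [exact: hxc | exact: hvc].
  have hn : wc [set t : R | 0 <= t] (fun s => dot3 (x j s) (x j s)).
    by apply: wdot => k; exact: hxc.
  exact: wcD (wcM ha ha) (wcM (wcB hn (wcK (c := 1))) (wcB hn (wcK (c := 1)))).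
have g0 : GG x v 0 = 0.
  apply: big1 => j _.
  have h1 : nn x j 0 = 1 by rewrite /nn -norm3_sq hx0 expr1n.
  have h2 : aa x v j 0 = 0 by rewrite /aa dot3C hv0.
  by rewrite h1 h2; ring.
have H := zero_lemma (K := N%:R * (3 * M + 4)) (d := 1/4) _ hc g0 (fun t _ => GG_ge0 x v t)
   (d_GG hxd hvd) (dGG_bound sigma N0 psi0 psiM).
have := GG_term x v i t; rewrite H // => h.
have s1 := sqr_ge0 (aa x v i t); have s2 := sqr_ge0 (nn x i t - 1).
have /eqP : aa x v i t ^+ 2 = 0 by lra.
rewrite sqrf_eq0 => /eqP h1.
have /eqP : (nn x i t - 1) ^+ 2 = 0 by lra.
rewrite sqrf_eq0 subr_eq0 => /eqP h2.
by split.
Qed.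
End F.

Section G.
Variables (R : realType) (N : nat) (sigma : R) (psi : 'I_N -> 'I_N -> R -> R)
  (x v : 'I_N -> R -> 'cV[R]_3).
Implicit Types (i j : 'I_N) (t : R).
Hypothesis N0 : (0 < N)%N.
Hypothesis psi0 : forall i j t, 0 <= t -> 0 <= psi i j t.
Variable M : R.
Hypothesis psiM : forall i j t, 0 <= t -> psi i j t <= M.
Hypothesis hxc : forall i (k : 'I_3), {within [set t : R | 0 <= t], continuous (fun s => x i s k 0)}.
Hypothesis hvc : forall i (k : 'I_3), {within [set t : R | 0 <= t], continuous (fun s => v i s k 0)}.
Hypothesis hxd : forall (i : 'I_N) (k : 'I_3) (t : R), 0 < t -> is_derive t 1 (fun s => x i s k 0) (v i t k 0).
Hypothesis hvd : forall (i : 'I_N) (k : 'I_3) (t : R), 0 < t ->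
     is_derive t 1 (fun s => v i s k 0) (rhs_v sigma psi x v i t k 0).
Hypothesis hx0 : forall i, norm3 (x i 0) = 1.
Hypothesis hv0 : forall i, dot3 (v i 0) (x i 0) = 0.
Hypothesis psiC : forall i j t, 0 <= t -> psi i j t = psi j i t.

Definition Dv i j t := Rot (x j t) (x i t) *m v j t - v i t.
Definition Tc i j t := if x j t == - x i t then 0 else psi i j t.

Lemma vF t i : 0 <= t -> dot3 (v i t) (rhs_v sigma psi x v i t) =
  N%:R^-1 * \sum_(j < N) (Tc i j t * dot3 (v i t) (Dv i j t)) +
  sigma / N%:R * \sum_(k < N) dot3 (v i t) (x k t).
Proof.
move=> ht; have [hn ha] := invariance N0 psi0 psiM hxc hvc hxd hvd hx0 hv0 ht i.
have hvx : dot3 (v i t) (x i t) = 0 by rewrite dot3C.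
rewrite /rhs_v !dot3Dr dot3Nr dot3Zr !dot3_sumr hvx mulr0 oppr0 add0r.
rewrite mulr_sumr [X in _ = _ + X]mulr_sumr; congr (_ + _); apply: eq_bigr => j _.
  rewrite /align_term /Tc; case: eqP => _; first by rewrite dot30r mul0r mulr0.
  by rewrite dot3Zr /Dv; ring.
by rewrite dot3Zr dot3Br !dot3Zr norm3_sq hn hvx; ring.
Qed.

Lemma pair_id t i j : 0 <= t ->
  - dissip_term (psi i j t / N%:R ^+ 2) (x j t) (x i t) (v j t) (v i t) =
  2 / N%:R ^+ 2 * (Tc i j t * dot3 (v i t) (Dv i j t)) +
  (N%:R ^+ 2)^-1 * (Tc i j t * (dot3 (v i t) (v i t) - dot3 (v j t) (v j t))).
Proof.
move=> ht; have [hni _] := invariance N0 psi0 psiM hxc hvc hxd hvd hx0 hv0 ht i.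
have [hnj _] := invariance N0 psi0 psiM hxc hvc hxd hvd hx0 hv0 ht j.
rewrite /dissip_term /Tc; case: eqP => h; first by rewrite !mul0r !mulr0 oppr0 addr0.
have hR := Rot_norm (v j t) hnj hni (introN eqP h).
rewrite norm3_sq /Dv !(dot3Dl, dot3Nl, dot3Dr, dot3Nr) hR.
rewrite (dot3C (Rot (x j t) (x i t) *m v j t) (v i t)); ring.
Qed.

Lemma Tc_sym t i j : 0 <= t -> Tc i j t = Tc j i t.
Proof.
move=> ht; rewrite /Tc psiC //.
have -> : (x i t == - x j t) = (x j t == - x i t).
  by rewrite -eqr_oppLR eq_sym.
by [].
Qed.

Lemma sym_sum t : 0 <= t ->
  \sum_(i < N) \sum_(j < N) (Tc i j t * (dot3 (v i t) (v i t) - dot3 (v j t) (v j t))) = 0.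
Proof.
move=> ht.
have E : \sum_(i < N) \sum_(j < N) (Tc i j t * dot3 (v j t) (v j t)) =
         \sum_(i < N) \sum_(j < N) (Tc i j t * dot3 (v i t) (v i t)).
  rewrite exchange_big /=; apply: eq_bigr => i _; apply: eq_bigr => j _.
  by rewrite Tc_sym.
have -> : \sum_(i < N) \sum_(j < N) (Tc i j t * (dot3 (v i t) (v i t) - dot3 (v j t) (v j t))) =
   \sum_(i < N) \sum_(j < N) (Tc i j t * dot3 (v i t) (v i t)) -
   \sum_(i < N) \sum_(j < N) (Tc i j t * dot3 (v j t) (v j t)).
  rewrite -sumrB; apply: eq_bigr => i _; rewrite -sumrB; apply: eq_bigr => j _; ring.
by rewrite E subrr.
Qed.

Lemma Q_id t : 0 <= t ->
  \sum_(k < N) \sum_(l < N) (dot3 (v k t - v l t) (x k t - x l t) + dot3 (x k t - x l t) (v k t - v l t))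
  = - 4 * \sum_(i < N) \sum_(k < N) dot3 (v i t) (x k t).
Proof.
move=> ht.
have inv := invariance N0 psi0 psiM hxc hvc hxd hvd hx0 hv0 ht.
have -> : \sum_(k < N) \sum_(l < N) (dot3 (v k t - v l t) (x k t - x l t) + dot3 (x k t - x l t) (v k t - v l t))
  = \sum_(k < N) \sum_(l < N) (- 2 * dot3 (v l t) (x k t)) + \sum_(k < N) \sum_(l < N) (- 2 * dot3 (v k t) (x l t)).
  rewrite -big_split /=; apply: eq_bigr => k _; rewrite -big_split /=; apply: eq_bigr => l _.
  have [_ hk] := inv k; have [_ hl] := inv l.
  rewrite !(dot3Dl, dot3Nl, dot3Dr, dot3Nr).
  rewrite (dot3C (x k t) (v k t)) (dot3C (x l t) (v l t)) (dot3C (x k t) (v l t)) (dot3C (x l t) (v k t)).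
  rewrite (dot3C (v k t) (x k t)) (dot3C (v l t) (x l t)) hk hl. ring.
rewrite exchange_big /= -big_split /= mulr_sumr; apply: eq_bigr => i _.
rewrite -big_split /= mulr_sumr; apply: eq_bigr => k _; ring.
Qed.

Definition Ealt t := N%:R^-1 * \sum_(k < N) dot3 (v k t) (v k t) +
  sigma / (2 * N%:R ^+ 2) * \sum_(k < N) \sum_(l < N) dot3 (x k t - x l t) (x k t - x l t).

Lemma energyE : energy sigma x v = Ealt.
Proof.
apply/funext => t; rewrite /energy /Ealt; congr (_ * _ + _ * _).
  by apply: eq_bigr => k _; rewrite norm3_sq.
by apply: eq_bigr => k _; apply: eq_bigr => l _; rewrite norm3_sq.
Qed.

Lemma hdiff k l t : 0 < t -> forall m : 'I_3,
  is_derive t 1 (fun s => (x k s - x l s) m 0) ((v k t - v l t) m 0).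
Proof.
move=> ht m.
have -> : (fun s => (x k s - x l s) m 0) = (fun s => x k s m 0 - x l s m 0).
  by apply/funext => s; rewrite !mxE.
rewrite !mxE; exact: dB (hxd k m ht) (hxd l m ht).
Qed.

Lemma rate_eq t : 0 < t ->
  N%:R^-1 * \sum_(k < N) (dot3 (rhs_v sigma psi x v k t) (v k t) + dot3 (v k t) (rhs_v sigma psi x v k t)) +
  sigma / (2 * N%:R ^+ 2) * \sum_(k < N) \sum_(l < N)
     (dot3 (v k t - v l t) (x k t - x l t) + dot3 (x k t - x l t) (v k t - v l t))
  = energy_rate psi x v t.
Proof.
move=> ht; have ht' := ltW ht.
have Nn : N%:R != 0 :> R by rewrite gt_eqF // ltr0n.
rewrite Q_id //.
set A := \sum_(i < N) \sum_(j < N) (Tc i j t * dot3 (v i t) (Dv i j t)).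
set B := \sum_(i < N) \sum_(k < N) dot3 (v i t) (x k t).
have hK : \sum_(k < N) (dot3 (rhs_v sigma psi x v k t) (v k t) + dot3 (v k t) (rhs_v sigma psi x v k t))
   = 2 * (N%:R^-1 * A + sigma / N%:R * B).
  rewrite /A /B !mulr_sumr -big_split /= mulr_sumr; apply: eq_bigr => i _.
  by rewrite dot3C vF //; ring.
have hR : energy_rate psi x v t = 2 / N%:R ^+ 2 * A.
  rewrite /energy_rate -sumrN.
  have -> : \sum_(i < N) - \sum_(j < N) dissip_term (psi i j t / N%:R ^+ 2) (x j t) (x i t) (v j t) (v i t)
    = \sum_(i < N) \sum_(j < N) (2 / N%:R ^+ 2 * (Tc i j t * dot3 (v i t) (Dv i j t)) +
       (N%:R ^+ 2)^-1 * (Tc i j t * (dot3 (v i t) (v i t) - dot3 (v j t) (v j t)))).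
    apply: eq_bigr => i _; rewrite -sumrN; apply: eq_bigr => j _; exact: pair_id.
  have -> : \sum_(i < N) \sum_(j < N) (2 / N%:R ^+ 2 * (Tc i j t * dot3 (v i t) (Dv i j t)) +
       (N%:R ^+ 2)^-1 * (Tc i j t * (dot3 (v i t) (v i t) - dot3 (v j t) (v j t)))) =
     2 / N%:R ^+ 2 * A + (N%:R ^+ 2)^-1 * \sum_(i < N) \sum_(j < N)
        (Tc i j t * (dot3 (v i t) (v i t) - dot3 (v j t) (v j t))).
    rewrite /A !mulr_sumr -big_split /=; apply: eq_bigr => i _.
    by rewrite !mulr_sumr -big_split.
  by rewrite sym_sum // mulr0 addr0.
rewrite hK hR; field.
by rewrite Nn.
Qed.

Lemma energy_deriv t : 0 < t -> is_derive t 1 (energy sigma x v) (energy_rate psi x v t).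
Proof.
move=> ht; rewrite energyE; apply: is_derive_eq.
  have h1 := dS (h := fun k s => dot3 (v k s) (v k s))
            (fun k => ddot (fun m => hvd k m ht) (fun m => hvd k m ht)).
  have h2 := dS (h := fun k s => \sum_(l < N) dot3 (x k s - x l s) (x k s - x l s))
            (fun k => dS (h := fun l s => dot3 (x k s - x l s) (x k s - x l s))
               (fun l => ddot (hdiff k l ht) (hdiff k l ht))).
  exact: (dD (dC N%:R^-1 h1) (dC (sigma / (2 * N%:R ^+ 2)) h2)).
exact: rate_eq.
Qed.

Hypothesis sigma0 : 0 <= sigma.

Lemma energy_cont : {within [set t : R | 0 <= t], continuous (energy sigma x v)}.
Proof.
rewrite energyE /Ealt.
apply: wcD; apply: wcC.
  apply: (wcS (h := fun k s => dot3 (v k s) (v k s))) => k.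
  by apply: wdot => m; exact: hvc.
apply: (wcS (h := fun k s => \sum_(l < N) dot3 (x k s - x l s) (x k s - x l s))) => k.
apply: (wcS (h := fun l s => dot3 (x k s - x l s) (x k s - x l s))) => l.
have hd : forall m : 'I_3, wc [set t : R | 0 <= t] (fun s => (x k s - x l s) m 0).
  move=> m.
  have -> : (fun s => (x k s - x l s) m 0) = (fun s => x k s m 0 - x l s m 0).
    by apply/funext => s; rewrite !mxE.
  by apply: wcB; [exact: hxc | exact: hxc].
exact: wdot.
Qed.

Lemma rate_le0 t : 0 <= t -> energy_rate psi x v t <= 0.
Proof.
move=> ht; rewrite /energy_rate oppr_le0; apply: sumr_ge0 => i _; apply: sumr_ge0 => j _.
rewrite /dissip_term; case: ifP => _ //.
apply: mulr_ge0; last exact: sqr_ge0.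
by apply: divr_ge0; [exact: psi0 | rewrite exprn_ge0 // ler0n].
Qed.

Lemma energy_mono t : 0 <= t -> energy sigma x v t <= energy sigma x v 0.
Proof.
move=> ht.
have := @mono_exp _ (energy sigma x v) (energy_rate psi x v) 0 0 t (lexx 0) ht energy_cont
  (fun s hs => energy_deriv hs).
rewrite oppr0 !mul0r expR0 !mul1r; apply => s hs _.
by rewrite mul0r; apply: rate_le0; exact: ltW.
Qed.

Lemma Vmax_bound t : 0 <= t -> Vmax v t <= Num.sqrt (N%:R * energy sigma x v 0).
Proof.
move=> ht; rewrite /Vmax; apply: bigmax_le; first exact: sqrtr_ge0.
move=> i _.
have Npos : 0 < N%:R :> R by rewrite ltr0n.
have hE := energy_mono ht.
have hsum : dot3 (v i t) (v i t) <= \sum_(k < N) dot3 (v k t) (v k t).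
  rewrite (bigD1 i) //= lerDl; apply: sumr_ge0 => k _; exact: dot3_ge0.
have hpot : 0 <= sigma / (2 * N%:R ^+ 2) * \sum_(k < N) \sum_(l < N) norm3 (x k t - x l t) ^+ 2.
  apply: mulr_ge0.
    by apply: divr_ge0 => //; rewrite mulr_ge0 // exprn_ge0 // ler0n.
  by apply: sumr_ge0 => k _; apply: sumr_ge0 => l _; exact: sqr_ge0.
have hK : \sum_(k < N) dot3 (v k t) (v k t) <= N%:R * energy sigma x v t.
  rewrite /energy mulrDr [N%:R * (N%:R^-1 * _)]mulrA mulfV ?gt_eqF // mul1r.
  have -> : \sum_(k < N) norm3 (v k t) ^+ 2 = \sum_(k < N) dot3 (v k t) (v k t).
    by apply: eq_bigr => k _; rewrite norm3_sq.
  rewrite lerDl; apply: mulr_ge0 => //; exact: ltW.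
have hE' : N%:R * energy sigma x v t <= N%:R * energy sigma x v 0 by rewrite ler_pM2l.
have hs0 : 0 <= \sum_(k < N) dot3 (v k t) (v k t) by apply: sumr_ge0 => k _; exact: dot3_ge0.
rewrite /norm3 ler_sqrt; last exact: le_trans hs0 (le_trans hK hE').
exact: le_trans hsum (le_trans hK hE').
Qed.
End G.

Unset Implicit Arguments.

Theorem proposition3p3 (R : realType) (N : nat) (sigma : R)
    (psi : 'I_N -> 'I_N -> R -> R) (x v : 'I_N -> R -> 'cV[R]_3) :
  (0 < N)%N ->
  0 <= sigma ->
  (forall i j t, 0 <= t -> 0 <= psi i j t) ->
  (exists M : R, forall i j t, 0 <= t -> psi i j t <= M) ->
  (forall i j t, 0 <= t -> psi i j t = psi j i t) ->
  (* continuity of the solution on [0, +oo) *)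
  (forall i (k : 'I_3), {within [set t : R | 0 <= t], continuous (fun s => x i s k 0)}) ->
  (forall i (k : 'I_3), {within [set t : R | 0 <= t], continuous (fun s => v i s k 0)}) ->
  (* the ODE system for t > 0 *)
  (forall (i : 'I_N) (k : 'I_3) (t : R), 0 < t -> is_derive t 1 (fun s => x i s k 0) (v i t k 0)) ->
  (forall (i : 'I_N) (k : 'I_3) (t : R), 0 < t ->
     is_derive t 1 (fun s => v i s k 0) (rhs_v sigma psi x v i t k 0)) ->
  (* initial data *)
  (forall i, norm3 (x i 0) = 1) ->
  (forall i, dot3 (v i 0) (x i 0) = 0) ->
  (forall t : R, 0 < t -> is_derive t 1 (energy sigma x v) (energy_rate psi x v t)) /\
  (forall t : R, 0 <= t -> Vmax v t <= Num.sqrt (N%:R * energy sigma x v 0)).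
Proof.
move=> N0 sigma0 psi0 [M psiM] psiC hxc hvc hxd hvd hx0 hv0; split.
  by move=> t ht; exact: (energy_deriv N0 psi0 psiM hxc hvc hxd hvd hx0 hv0 psiC ht).
by move=> t ht; exact: (Vmax_bound N0 psi0 psiM hxc hvc hxd hvd hx0 hv0 psiC sigma0 ht).
Qed.
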